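(* Let $G$ be an elementary abelian $2$-group (an $\mathbb{F}_2$-vector space) and let $T\subseteq G$ be a generating subset of $G$ with $0\in T$. Let $\mathcal{U}$ be the group with presentation $$\mathcal{U}=\big\langle (t^{\mathcal U})_{t\in T}\;\big|\;(t^{\mathcal U})^2=1,\ t^{\mathcal U}s^{\mathcal U}(t^{\mathcal U})^{-1}=(2t-s)^{\mathcal U}\text{ for all } s,t\in T\big\rangle,$$ let $\mathcal{W}$ be the subgroup generated by $\{(0,t,-1)\mid t\in T\}$ of the group $(G\wedge G)\times G\times\{1,-1\}$ with multiplication $(l,g,v)(l',g',v')=(l+l'+g\wedge(vg'),\,g+vg',\,vv')$, and let $\phi:\mathcal U\to\mathcal W$ be the group homomorphism determined by $t^{\mathcal U}\mapsto(0,t,-1)$. Then: (1) $\phi$ is injective if $T\setminus\{0\}$ is a basis of $G$; (2) if $G$ has finite dimension $n$ over $\mathbb{F}_2$ and $|T\setminus\{0\}|>\frac{n(n+1)}{2}$, then $\phi$ is not injective; (3) if $T=G$, then $\phi$ is an isomorphism if and only if $\dim_{\mathbb{F}_2}(G)\le 2$.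
   Context: Since $2s=0$ in $G$, the relation in $\mathcal U$ reads $t^{\mathcal U}s^{\mathcal U}(t^{\mathcal U})^{-1}=s^{\mathcal U}$. The homomorphism $\phi$ exists since the elements $(0,t,-1)$ satisfy the defining relations of $\mathcal U$, and it is surjective by construction. *)

(* Defs.v *)
From HB Require Import structures.
From mathcomp Require Import all_boot all_order all_algebra.
Set Implicit Arguments. Unset Strict Implicit. Unset Printing Implicit Defensive.
Import GRing.Theory.
Local Open Scope ring_scope.

Section Defs.
Variable G : zmodType.

Definition elem_abelian2 : Prop := forall x : G, x + x = 0.

Definition generates (B : {pred G}) : Prop :=
  forall g : G, exists s : seq G, all (fun x => x \in B) s /\ g = \sum_(x <- s) x.

Definition f2_independent (B : {pred G}) : Prop :=
  forall s : seq G, uniq s -> all (fun x => x \in B) s ->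
    \sum_(x <- s) x = 0 -> s = [::].

Definition is_basis (B : {pred G}) : Prop := f2_independent B /\ generates B.

Definition has_dim (n : nat) : Prop :=
  exists b : seq G, [/\ uniq b, size b = n & is_basis (fun x => x \in b)].

(* ---------- The exterior square G /\ G ----------
   An element of G /\ G is represented by a formal sum  sum_i g_i /\ h_i
   (a list of pairs); such a formal sum is zero in G /\ G iff every
   alternating Z-bilinear map out of G x G vanishes on it
   (universal property of the exterior square). *)
Definition wedge_zero (l : seq (G * G)) : Prop :=
  forall (A : zmodType) (b : G -> G -> A),
    (forall h, {morph b^~ h : x y / x + y}) ->
    (forall g, {morph b g : x y / x + y}) ->
    (forall g, b g g = 0) ->
    \sum_(p <- l) b p.1 p.2 = 0.

Definition wneg (l : seq (G * G)) : seq (G * G) := map (fun p => (- p.1, p.2)) l.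

(* ---------- The group (G /\ G) x G x {1,-1} ----------
   the sign v is encoded as a bool: true = -1, false = 1 *)
Definition Wt := (seq (G * G) * G * bool)%type.

Definition sact (v : bool) (g : G) : G := if v then - g else g.

Definition wmul (x y : Wt) : Wt :=
  let: (l, g, v) := x in let: (l', g', v') := y in
  (l ++ l' ++ [:: (g, sact v g')], g + sact v g', addb v v').

Definition wone : Wt := ([::], 0, false).

Definition winv (x : Wt) : Wt :=
  let: (l, g, v) := x in (wneg l ++ [:: (g, g)], - sact v g, v).

Definition weq (x y : Wt) : Prop :=
  x.1.2 = y.1.2 /\ x.2 = y.2 /\ wedge_zero (x.1.1 ++ wneg y.1.1).

(* ---------- The presented group U ----------
   Elements of U are words in the letters t^U (t in T) and their inverses:
   a letter (t, false) is t^U, (t, true) is (t^U)^-1.  Two words are equal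
   in U iff they are related by the congruence generated by free
   cancellation and the defining relations. *)
Definition word := seq (G * bool).

Definition word_in (T : {pred G}) (w : word) : bool := all (fun a => a.1 \in T) w.

Inductive ustep (T : {pred G}) : word -> word -> Prop :=
| us_free t b : t \in T -> ustep T [:: (t, b); (t, ~~ b)] [::]
| us_sq t : t \in T -> ustep T [:: (t, false); (t, false)] [::]
| us_conj t s : t \in T -> s \in T ->
    ustep T [:: (t, false); (s, false); (t, true)] [:: (t *+ 2 - s, false)].

Inductive ueq (T : {pred G}) : word -> word -> Prop :=
| ueq_step u v a c : ustep T u v -> ueq T (a ++ u ++ c) (a ++ v ++ c)
| ueq_refl u : ueq T u u
| ueq_sym u v : ueq T u v -> ueq T v u
| ueq_trans u v w : ueq T u v -> ueq T v w -> ueq T u w.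

Definition phi_gen (t : G) : Wt := ([::], t, true).

Definition phi_letter (a : G * bool) : Wt :=
  if a.2 then winv (phi_gen a.1) else phi_gen a.1.

Definition phiw (w : word) : Wt := foldr (fun a acc => wmul (phi_letter a) acc) wone w.

Definition phi_injective (T : {pred G}) : Prop :=
  forall u v : word, word_in T u -> word_in T v ->
    weq (phiw u) (phiw v) -> ueq T u v.

End Defs.

(* Main.v *)
Require Import Defs.
From HB Require Import structures.
From mathcomp Require Import all_boot all_order all_algebra zify.
From Stdlib Require Import Classical ClassicalEpsilon.
Import GRing.Theory.

Module P1.
Local Open Scope ring_scope.
Local Set Implicit Arguments. Local Unset Strict Implicit. Local Unset Printing Implicit Defensive.

Section USide.
Local Open Scope nat_scope.
Variable G : zmodType.
Hypothesis hG : elem_abelian2 G.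
Variable T : {pred G}.

Definition cnt (x : G) (w : word G) : nat := count_mem x (map fst w).

Lemma oppE (x : G) : (- x = x)%R.
Proof. by apply/eqP; rewrite eq_sym -addr_eq0 hG. Qed.

Lemma t2s (t s : G) : (t *+ 2 - s = s)%R.
Proof. by rewrite mulr2n hG sub0r oppE. Qed.

Lemma ueq_cat u v a c : ueq T u v -> ueq T (a ++ u ++ c) (a ++ v ++ c).
Proof.
elim=> [u0 v0 a0 c0 st| u0 | u0 v0 _ IH | u0 v0 w0 _ IH1 _ IH2].
- rewrite !catA -!(catA a) -!catA. 
  have := @ueq_step G T u0 v0 (a ++ a0) (c0 ++ c) st.
  by rewrite -!catA.
- exact: ueq_refl.
- exact: ueq_sym.
- exact: ueq_trans IH2.
Qed.

Lemma ueq_cons x u v : ueq T u v -> ueq T (x :: u) (x :: v).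
Proof. by move=> h; have := ueq_cat [:: x] [::] h; rewrite !cats0. Qed.

Lemma ueq_flip t b w : t \in T -> ueq T ((t, b) :: w) ((t, false) :: w).
Proof.
move=> tT; case: b; last exact: ueq_refl.
have h1 : ueq T [:: (t, true)] [:: (t, false); (t, false); (t, true)].
  apply: ueq_sym.
  by have := @ueq_step G T _ _ [::] [:: (t, true)] (us_sq tT).
have h2 : ueq T [:: (t, false); (t, false); (t, true)] [:: (t, false)].
  by have := @ueq_step G T _ _ [:: (t, false)] [::] (us_free false tT); rewrite cats0.
by have := ueq_cat [::] w (ueq_trans h1 h2).
Qed.

Lemma ueq_comm t s w : t \in T -> s \in T ->
  ueq T ((t, false) :: (s, false) :: w) ((s, false) :: (t, false) :: w).
Proof.
move=> tT sT.
have h1 : ueq T [:: (t, false); (s, false)] [:: (t, false); (s, false); (t, true); (t, false)].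
  apply: ueq_sym.
  by have := @ueq_step G T _ _ [:: (t, false); (s, false)] [::] (us_free true tT); rewrite cats0.
have h2 : ueq T [:: (t, false); (s, false); (t, true); (t, false)] [:: (s, false); (t, false)].
  have := @ueq_step G T _ _ [::] [:: (t, false)] (us_conj tT sT).
  by rewrite t2s.
by have := ueq_cat [::] w (ueq_trans h1 h2).
Qed.

Lemma ustep_par u v : ustep T u v -> forall x, odd (cnt x u) = odd (cnt x v).
Proof.
move=> st x; destruct st; rewrite /cnt /=.
- by case: (t == x).
- by case: (t == x).
- by rewrite t2s; case: (t == x); case: (s == x).
Qed.

Lemma ueq_par u v : ueq T u v -> forall x, odd (cnt x u) = odd (cnt x v).
Proof.
elim=> [u0 v0 a0 c0 st| u0 | u0 v0 _ IH | u0 v0 w0 _ IH1 _ IH2] x.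
- by rewrite /cnt !map_cat !count_cat !oddD -!/(cnt x _) (ustep_par st).
- by [].
- by rewrite IH.
- by rewrite IH1 IH2.
Qed.

Lemma move_front w t : word_in T w -> t \in map fst w ->
  exists r, [/\ word_in T r, ueq T w ((t, false) :: r), size w = (size r).+1 &
     forall x, cnt x w = cnt x r + (t == x)].
Proof.
elim: w => [|[a b] w IH] //= /andP[aT wT].
rewrite in_cons; case: eqP => [->|ne] /= tw.
  exists w; split => //; first exact: ueq_flip.
  by move=> x; rewrite /cnt /= addnC.
have [r [rT e sz c]] := IH wT tw.
exists ((a, false) :: r); split => //=.
- by rewrite aT.
- apply: ueq_trans (ueq_cons (a, b) e) _.
  apply: ueq_trans (ueq_flip _ _ aT) _.
  apply: ueq_comm => //.
  case/mapP: tw => [[t' b'] hin ->]; exact: (allP wT _ hin).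
- by rewrite sz.
- by move=> x; rewrite /cnt /= -/(cnt x w) c -/(cnt x r); rewrite addnA.
Qed.

Lemma complete_n n : forall u v, (size u + size v <= n)%N -> word_in T u -> word_in T v ->
  (forall x, odd (cnt x u) = odd (cnt x v)) -> ueq T u v.
Proof.
elim: n => [|n IH] u v.
  by case: u; case: v => // _ _ _ _; exact: ueq_refl.
have consc : forall a u' v, (size (a :: u') + size v <= n.+1)%N -> word_in T (a :: u') -> word_in T v ->
   (forall x, odd (cnt x (a :: u')) = odd (cnt x v)) -> ueq T (a :: u') v.
  move=> [t b] u' v' sz /= /andP[tT u'T] v'T par.
  have cU x : cnt x ((t, b) :: u') = (t == x) + cnt x u' by [].
  case tv : (t \in map fst v').
    have [r [rT e szv c]] := move_front v'T tv.
    apply: ueq_trans (ueq_flip _ _ tT) _.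
    apply: ueq_trans _ (ueq_sym e).
    apply: ueq_cons; apply: IH => //.
      by move: sz; rewrite /= szv; lia.
    by move=> x; move: (par x); rewrite cU c oddD [odd (_ + _)]oddD addbC; move/addIb.
  have ct : cnt t v' = 0%N by apply/count_memPn; rewrite tv.
  have tu : t \in map fst u'.
    move: (par t); rewrite cU ct eqxx /= => h.
    by rewrite -has_pred1 has_count lt0n; apply/eqP => c0; move: h; rewrite /cnt c0.
  have [r [rT e szu c]] := move_front u'T tu.
  apply: ueq_trans (ueq_flip _ _ tT) _.
  apply: ueq_trans (ueq_cons _ e) _.
  have hs : ueq T ((t, false) :: (t, false) :: r) r.
    by have := @ueq_step G T _ _ [::] r (us_sq tT).
  apply: ueq_trans hs _.
  apply: IH => //.
    by move: sz; rewrite /= szu; lia.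
  move=> x; rewrite -par cU c.
  by rewrite addnC -addnA oddD [odd (_ + _)]oddD; case: (t == x); case: (odd _).
case: u => [|a u'] sz uT vT par.
  case: v sz vT par => [|a v'] sz vT par; first exact: ueq_refl.
  apply: ueq_sym; apply: consc; [by move: sz => /=; lia| by []| by []| by move=> x; rewrite par].

exact: consc.
Qed.

Lemma complete u v : word_in T u -> word_in T v ->
  (forall x, odd (cnt x u) = odd (cnt x v)) -> ueq T u v.
Proof. exact: (@complete_n _ u v (leqnn _)). Qed.

End USide.

End P1.
Import P1.

Module P2.
Local Open Scope ring_scope.
Local Set Implicit Arguments. Local Unset Strict Implicit. Local Unset Printing Implicit Defensive.

Section WSide.
Variable G : zmodType.
Hypothesis hG : elem_abelian2 G.

Definition gsum (w : word G) : G := \sum_(a <- w) a.1.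

Lemma phiw_cons (a : G * bool) (w : word G) : phiw (a :: w) = wmul (phi_letter a) (phiw w).
Proof. by []. Qed.

Lemma phiw_sgn (w : word G) : (phiw w).2 = odd (size w).
Proof.
elim: w => [|a w IH] //; rewrite phiw_cons /=.
case: (phiw w) IH => [[l g] v] /= ->.
by case: a => t [].
Qed.

Lemma phiw_g (w : word G) : (phiw w).1.2 = gsum w.
Proof.
elim: w => [|a w IH]; first by rewrite /gsum big_nil.
rewrite phiw_cons /gsum big_cons -/(gsum w).
case: (phiw w) IH => [[l g] v] /= ->.
by case: a => t [] /=; case: v => /=; rewrite ?(oppE hG) ?opprK.
Qed.

Definition isbil (A : zmodType) (b : G -> G -> A) :=
  [/\ (forall h, {morph b^~ h : x y / x + y}),
      (forall g, {morph b g : x y / x + y}) &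
      (forall g, b g g = 0)].

Definition Bw (A : zmodType) (b : G -> G -> A) (w : word G) :=
  \sum_(p <- (phiw w).1.1) b p.1 p.2.

Section Bil.
Variables (A : zmodType) (b : G -> G -> A).
Hypothesis hb : isbil b.

Lemma bil0l y : b 0 y = 0.
Proof. case: hb => h1 _ _. have e := h1 y 0 0; rewrite addr0 in e. by apply: (addrI (b 0 y)); rewrite addr0 -e. Qed.
Lemma bil0r y : b y 0 = 0.
Proof. case: hb => _ h2 _. have e := h2 y 0 0; rewrite addr0 in e. by apply: (addrI (b y 0)); rewrite addr0 -e. Qed.
Lemma bilNl x y : b (- x) y = - b x y.
Proof. case: hb => h1 _ _. by apply/eqP; rewrite -addr_eq0 -h1 addNr bil0l. Qed.
Lemma bilNr x y : b x (- y) = - b x y.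
Proof. case: hb => _ h2 _. by apply/eqP; rewrite -addr_eq0 -h2 addNr bil0r. Qed.
Lemma bil2 x y : b x y + b x y = 0.
Proof. case: hb => h1 _ _. by rewrite -h1 hG bil0l. Qed.
Lemma bilN x y : - b x y = b x y.
Proof. by apply/eqP; rewrite eq_sym -addr_eq0 bil2. Qed.
Lemma bilC x y : b y x = b x y.
Proof.
case: hb => h1 h2 h3.
have := h3 (x + y); rewrite h1 !h2 !h3 add0r addr0 => /eqP.
by rewrite addr_eq0 bilN => /eqP.
Qed.

Lemma Bw_cons (a : G * bool) (w : word G) : Bw b (a :: w) = Bw b w + b a.1 (gsum w).
Proof.
rewrite /Bw phiw_cons -phiw_g.
case: (phiw w) => [[l g] v] /=.
case: hb => _ _ h3.
case: a => t [] /=; rewrite ?big_cons big_cat /= big_cons big_nil addr0 ?opprK (oppE hG) //.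
by rewrite h3 add0r.
Qed.
End Bil.

Lemma weq_B (u v : word G) : weq (phiw u) (phiw v) ->
  forall (A : zmodType) (b : G -> G -> A), isbil b -> Bw b u = Bw b v.
Proof.
move=> [_ [_ hw]] A b hb; have := hw A b.
case: (hb) => h1 h2 h3 /(_ h1 h2 h3).
rewrite big_cat /= /wneg big_map /=.
rewrite [X in _ + X](eq_bigr (fun j => - b j.1 j.2)); last by move=> j _; rewrite (bilNl hb).
by rewrite sumrN => /eqP; rewrite subr_eq0 => /eqP.
Qed.

Lemma weq_of (u v : word G) : gsum u = gsum v -> odd (size u) = odd (size v) ->
  (forall (A : zmodType) (b : G -> G -> A), isbil b -> Bw b u = Bw b v) ->
  weq (phiw u) (phiw v).
Proof.
move=> hg hs hB; split; first by rewrite !phiw_g.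
split; first by rewrite !phiw_sgn.
move=> A b h1 h2 h3; have hb : isbil b by [].
have := hB A b hb; rewrite /Bw => e.
rewrite big_cat /= /wneg big_map /=.
rewrite [X in _ + X](eq_bigr (fun j => - b j.1 j.2)); last by move=> j _; rewrite (bilNl hb).
by rewrite sumrN e subrr.
Qed.

End WSide.

End P2.
Import P2.

Module P3.
Local Open Scope ring_scope.
Local Set Implicit Arguments. Local Unset Strict Implicit. Local Unset Printing Implicit Defensive.

Section Lin.
Variable G : zmodType.
Hypothesis hG : elem_abelian2 G.

Lemma sum_count (V : nmodType) (L s : seq G) (F : G -> V) : uniq L ->
  all (fun x => x \in L) s ->
  \sum_(x <- s) F x = \sum_(x <- L) F x *+ count_mem x s.
Proof.
move=> uL; elim: s => [|a s IH] /=.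
  by move=> _; rewrite big_nil big1_seq // => x _; rewrite mulr0n.
case/andP=> aL sL; rewrite big_cons IH //.
under [in RHS]eq_bigr do rewrite mulrnDr.
rewrite big_split /=; congr (_ + _).
rewrite (bigD1_seq a) //= eqxx mulr1n big1 ?addr0 // => x /negbTE.
by rewrite eq_sym => ->; rewrite mulr0n.
Qed.

Lemma mulrn_odd (x : G) n : x *+ n = x *+ odd n.
Proof.
elim: n => [|n IH] //; rewrite mulrS IH /=.
by case: (odd n) => /=; rewrite ?hG ?addr0.
Qed.

Lemma WD (Bp : {pred G}) : f2_independent Bp -> forall s s',
  all (fun x => x \in Bp) s -> all (fun x => x \in Bp) s' ->
  \sum_(x <- s) x = \sum_(x <- s') x ->
  forall x, odd (count_mem x s) = odd (count_mem x s').
Proof.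
move=> ind s s' hs hs' e.
set L := undup (s ++ s').
have uL : uniq L by apply: undup_uniq.
have sL : all (fun x => x \in L) s by apply/allP => x xs; rewrite mem_undup mem_cat xs.
have s'L : all (fun x => x \in L) s' by apply/allP => x xs; rewrite mem_undup mem_cat xs orbT.
set D := fun z => odd (count_mem z s) != odd (count_mem z s').
have hD : \sum_(z <- filter D L) z = 0.
  rewrite big_filter big_mkcond /=.
  rewrite (eq_bigr (fun z => z *+ odd (count_mem z s) - z *+ odd (count_mem z s'))); last first.
    move=> z _; rewrite /D; case: (odd _); case: (odd _) => /=;
    by rewrite ?subrr ?subr0 ?sub0r ?(oppE hG).
  rewrite sumrB.
  rewrite (eq_bigr (fun z => z *+ count_mem z s)); last by move=> z _; rewrite -mulrn_odd.
  rewrite [X in _ - X](eq_bigr (fun z => z *+ count_mem z s')); last by move=> z _; rewrite -mulrn_odd.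
  by rewrite -!sum_count // e subrr.
have hnil : filter D L = [::].
  apply: ind hD; first by rewrite filter_uniq.
  apply/allP => z; rewrite mem_filter mem_undup mem_cat => /andP[_ /orP[zs|zs]].
    exact: (allP hs).
  exact: (allP hs').
move=> x; case xL : (x \in L).
  have : x \notin filter D L by rewrite hnil.
  by rewrite mem_filter xL andbT /D negbK => /eqP.
move/negbT: xL; rewrite mem_undup mem_cat negb_or => /andP[xs xs'].
by rewrite (count_memPn xs) (count_memPn xs').
Qed.

Definition spanL (bs : seq G) (g : G) :=
  exists s, all (fun x => x \in bs) s /\ g = \sum_(x <- s) x.

Lemma span0 bs : spanL bs 0.
Proof. by exists [::]; rewrite big_nil. Qed.

Lemma spanD bs x y : spanL bs x -> spanL bs y -> spanL bs (x + y).
Proof.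
move=> [s [hs ->]] [s' [hs' ->]]; exists (s ++ s'); split.
  by rewrite all_cat hs hs'.
by rewrite big_cat.
Qed.

Lemma span_mem bs x : x \in bs -> spanL bs x.
Proof. by move=> xb; exists [:: x]; rewrite /= xb big_seq1. Qed.

Definition rep (bs : seq G) (g : G) : seq G :=
  epsilon (inhabits [::]) (fun s => all (fun x => x \in bs) s /\ g = \sum_(x <- s) x).

Lemma rep_spec bs g : spanL bs g ->
  all (fun x => x \in bs) (rep bs g) /\ g = \sum_(x <- rep bs g) x.
Proof. move=> h; exact: (epsilon_spec (inhabits [::]) _ h). Qed.

Definition crd (bs : seq G) (k : nat) (g : G) : bool :=
  odd (count_mem (nth 0 bs k) (rep bs g)).

Section Basis.
Variable bs : seq G.
Hypothesis ind : f2_independent (fun x => x \in bs).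
Hypothesis ubs : uniq bs.
Local Notation n := (size bs).

Lemma crd_rep k g s : all (fun x => x \in bs) s -> g = \sum_(x <- s) x ->
  crd bs k g = odd (count_mem (nth 0 bs k) s).
Proof.
move=> hs e; have [h1 h2] := rep_spec (ex_intro _ s (conj hs e)).
rewrite /crd; apply: (WD ind) => //; by rewrite -h2.
Qed.

Lemma crdD k x y : spanL bs x -> spanL bs y -> crd bs k (x + y) = crd bs k x (+) crd bs k y.
Proof.
move=> hx hy; have [ax ex] := rep_spec hx; have [ay ey] := rep_spec hy.
rewrite (@crd_rep k (x + y) (rep bs x ++ rep bs y)).
- by rewrite count_cat oddD.
- by rewrite all_cat ax ay.
- by rewrite big_cat -ex -ey.
Qed.

Lemma crd0 k : crd bs k 0 = false.
Proof. by rewrite (@crd_rep k 0 [::]) // big_nil. Qed.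

Lemma crd_nth k j : (j < n)%N -> (k < n)%N -> crd bs k (nth 0 bs j) = (j == k).
Proof.
move=> jn kn; rewrite (@crd_rep k _ [:: nth 0 bs j]) /=.
- by rewrite addn0 nth_uniq //; case: (j == k).
- by rewrite mem_nth.
- by rewrite big_seq1.
Qed.

Lemma recon g : spanL bs g -> g = \sum_(0 <= k < n) nth 0 bs k *+ crd bs k g.
Proof.
move=> hg; have [a e] := rep_spec hg.
rewrite {1}e (sum_count id ubs a) (big_nth 0) /=.
by apply: eq_bigr => k _; rewrite [LHS]mulrn_odd.
Qed.

Lemma count_mask (L : seq G) (m : bitseq) k : uniq L -> (k < size L)%N ->
  count_mem (nth 0 L k) (mask m L) = nth false m k.
Proof.
elim: L m k => [|z L IH] m k //= /andP[zL uL] kL.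
case: m => [|b m]; first by rewrite /= nth_nil.
have zm : z \notin mask m L by apply: contra zL; apply: mem_mask.
case: k kL => [|k] kL /=.
  by case: b => /=; rewrite ?eqxx (count_memPn zm).
have : z != nth 0 L k by apply: contraNneq zL => ->; rewrite mem_nth.
move/negbTE => hz.
by case: b => /=; rewrite IH // ?hz.
Qed.

Lemma crd_mask (m : bitseq) k : (k < n)%N -> crd bs k (\sum_(x <- mask m bs) x) = nth false m k.
Proof.
move=> kn; rewrite (@crd_rep k _ (mask m bs)) //.
- by rewrite count_mask //; case: (nth false m k).
- by apply/allP => x /mem_mask.
Qed.

End Basis.
End Lin.

End P3.
Import P3.

Module P4.
Local Open Scope ring_scope.
Local Set Implicit Arguments. Local Unset Strict Implicit. Local Unset Printing Implicit Defensive.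

Lemma TRI (A : zmodType) n (f : nat -> nat -> A) :
  \sum_(0 <= k < n) \sum_(0 <= l < n) f k l =
  \sum_(0 <= k < n) f k k +
  \sum_(0 <= k < n) \sum_(0 <= l < n) (if (k < l)%N then f k l + f l k else 0).
Proof.
elim: n => [|n IH]; first by rewrite !big_nil addr0.
rewrite big_nat_recr //=.
under eq_bigr do rewrite big_nat_recr //=.
rewrite big_split /= IH.
rewrite [\sum_(0 <= k < n.+1) f k k]big_nat_recr //=.
rewrite [X in _ = _ + X]big_nat_recr //=.
under [X in _ = _ + (X + _)]eq_bigr do rewrite big_nat_recr //=.
rewrite big_split /=.
have z : \sum_(0 <= l < n.+1) (if (n < l)%N then f n l + f l n else 0) = 0.
  by rewrite big1_seq // => l /andP[_]; rewrite mem_index_iota ltnS => /andP[_ hl]; rewrite ltnNge hl.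
have m : \sum_(0 <= i < n) (if (i < n)%N then f i n + f n i else 0) = \sum_(0<=i<n) (f i n + f n i).
  by apply: eq_big_nat => i /andP[_ ->].
rewrite z m addr0 big_split /= [\sum_(0 <= l < n.+1) f n l]big_nat_recr //=.
set D := \sum_(0 <= k < n) f k k.
set Y := \sum_(0 <= k < n) _.
set a := \sum_(0 <= i < n) f i n.
set c := \sum_(0 <= i < n) f n i.
rewrite -!addrA; congr (_ + _).
by rewrite [RHS]addrC -!addrA.
Qed.

Section Formula.
Variable G : zmodType.
Hypothesis hG : elem_abelian2 G.
Variable bs : seq G.
Hypothesis ind : f2_independent (fun x => x \in bs).
Hypothesis ubs : uniq bs.
Local Notation n := (size bs).
Local Notation e k := (nth 0 bs k).

Section B.
Variables (A : zmodType) (b : G -> G -> A).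
Hypothesis hb : isbil b.

Lemma bil_sumL I r (P : pred I) (F : I -> G) y :
  b (\sum_(i <- r | P i) F i) y = \sum_(i <- r | P i) b (F i) y.
Proof. case: (hb) => h1 _ _; exact: (big_morph (fun x => b x y) (h1 y) (bil0l hb y)). Qed.
Lemma bil_sumR I r (P : pred I) (F : I -> G) y :
  b y (\sum_(i <- r | P i) F i) = \sum_(i <- r | P i) b y (F i).
Proof. case: (hb) => _ h2 _; exact: (big_morph (b y) (h2 y) (bil0r hb y)). Qed.
Lemma bil_mulnL x m y : b (x *+ m) y = b x y *+ m.
Proof. case: (hb) => h1 _ _; elim: m => [|m IH]; first by rewrite !mulr0n bil0l. by rewrite !mulrS h1 IH. Qed.
Lemma bil_mulnR x m y : b y (x *+ m) = b y x *+ m.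
Proof. case: (hb) => _ h2 _; elim: m => [|m IH]; first by rewrite !mulr0n bil0r. by rewrite !mulrS h2 IH. Qed.

Lemma tors_xor (z : A) (p q : bool) : z + z = 0 -> z *+ p + z *+ q = z *+ (p (+) q).
Proof. by move=> zz; case: p; case: q => /=; rewrite ?addr0 ?add0r. Qed.

Lemma expand x y : spanL bs x -> spanL bs y ->
  b x y = \sum_(0 <= k < n) \sum_(0 <= l < n)
    (if (k < l)%N then b (e k) (e l) *+ ((crd bs k x && crd bs l y) (+) (crd bs l x && crd bs k y)) else 0).
Proof.
move=> hx hy.
rewrite {1}(recon hG ubs hx) {1}(recon hG ubs hy) bil_sumL.
under eq_bigr do rewrite bil_mulnL bil_sumR -sumrMnl.
under eq_bigr do under eq_bigr do rewrite bil_mulnR -mulrnA.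
rewrite TRI big1 ?add0r; last by move=> k _; case: hb => _ _ ->; rewrite mul0rn.
apply: eq_bigr => k _; apply: eq_bigr => l _.
case: ifP => // _.
rewrite !mulnb (bilC hG hb (e l) (e k)) tors_xor ?(bil2 hG hb) //.
by rewrite andbC [X in _ (+) X]andbC.
Qed.

Definition Wsp (w : word G) := forall a, a \in w -> spanL bs a.1.
Definition Sc k (w : word G) := count (fun a => crd bs k a.1) w.
Definition Qc k l (w : word G) := count (fun a => crd bs k a.1 && crd bs l a.1) w.

Lemma Wsp_cons a w : Wsp (a :: w) -> spanL bs a.1 /\ Wsp w.
Proof.
move=> h; split; first by apply: h; rewrite in_cons eqxx.
by move=> c cw; apply: h; rewrite in_cons cw orbT.
Qed.

Lemma gsum_cons (a : G * bool) w : gsum (a :: w) = a.1 + gsum w.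
Proof. by rewrite /gsum big_cons. Qed.

Lemma gsum_span w : Wsp w -> spanL bs (gsum w).
Proof.
elim: w => [|a w IH] h; first by rewrite /gsum big_nil; exact: span0.
have [h1 h2] := Wsp_cons h; rewrite gsum_cons; exact: spanD h1 (IH h2).
Qed.

Lemma crd_gsum k w : Wsp w -> crd bs k (gsum w) = odd (Sc k w).
Proof.
elim: w => [|a w IH] h; first by rewrite /gsum big_nil (crd0 hG ind).
have [h1 h2] := Wsp_cons h; rewrite gsum_cons (crdD hG ind _ h1 (gsum_span h2)) IH //.
by rewrite /Sc /= oddD oddb.
Qed.

Lemma boolid (tk tl : bool) (sk sl q : nat) :
  odd ((tk + sk) * (tl + sl) + ((tk && tl) + q))%N =
  odd (sk * sl + q)%N (+) ((tk && odd sl) (+) (tl && odd sk)).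
Proof.
rewrite !oddD !oddM !oddD !oddb.
by case: tk; case: tl; case: (odd sk); case: (odd sl); case: (odd q).
Qed.

Lemma Bformula w : Wsp w -> Bw b w = \sum_(0 <= k < n) \sum_(0 <= l < n)
    (if (k < l)%N then b (e k) (e l) *+ odd (Sc k w * Sc l w + Qc k l w)%N else 0).
Proof.
elim: w => [|a w IH] h.
  rewrite /Bw /= big_nil big1 // => k _; rewrite big1 // => l _.
  by case: ifP => // _; rewrite mulr0n.
have [h1 h2] := Wsp_cons h.
rewrite Bw_cons // IH // (expand h1 (gsum_span h2)) -big_split /=.
apply: eq_bigr => k _; rewrite -big_split /=; apply: eq_bigr => l _.
case: ifP => _; last by rewrite addr0.
rewrite tors_xor ?(bil2 hG hb) // !crd_gsum //.
congr (_ *+ _); rewrite /Sc /Qc /=.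
by rewrite boolid.
Qed.

End B.

Lemma weq_of_N u v : Wsp u -> Wsp v -> odd (size u) = odd (size v) ->
  (forall k l, (k <= l < n)%N -> odd (Qc k l u) = odd (Qc k l v)) ->
  weq (phiw u) (phiw v).
Proof.
move=> hu hv hs hq.
have hS k : (k < n)%N -> odd (Sc k u) = odd (Sc k v).
  move=> kn; have := hq k k; rewrite leqnn kn /Qc => /(_ isT).
  by rewrite (eq_count (a2 := fun a => crd bs k a.1)) ?[X in _ = odd X](eq_count (a2 := fun a => crd bs k a.1)) // => a; rewrite andbb.
apply: (weq_of hG).
- rewrite (recon hG ubs (gsum_span hu)) (recon hG ubs (gsum_span hv)).
  apply: eq_big_nat => k /andP[_ kn]; by rewrite !crd_gsum // hS.
- exact: hs.
- move=> A b hb; rewrite !Bformula //.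
  apply: eq_big_nat => k /andP[_ kn]; apply: eq_big_nat => l /andP[_ ln].
  case: ifP => // kl; congr (_ *+ _).
  by rewrite !oddD !oddM !hS // hq // (ltnW kl).
Qed.

End Formula.

End P4.
Import P4.

Module P5.
Local Set Implicit Arguments. Local Unset Strict Implicit. Local Unset Printing Implicit Defensive.

Lemma triT n : (\sum_(0 <= i < n) \sum_(0 <= j < n) (i <= j)) * 2 = n * n.+1.
Proof.
elim: n => [|n IH]; first by rewrite big_nil.
rewrite big_nat_recr //=.
under eq_bigr do rewrite big_nat_recr //=.
rewrite big_split /=.
have h1 : \sum_(0 <= i < n) (i <= n) = n.
  rewrite (eq_big_nat _ _ (F2 := fun _ => 1)); last by move=> i /andP[_ /ltnW ->].
  by rewrite sum_nat_const_nat muln1 subn0.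
have h2 : \sum_(0 <= j < n.+1) (n <= j) = 1.
  rewrite big_nat_recr //= leqnn big1_seq ?add0n // => j /andP[_]; rewrite mem_index_iota => /andP[_ hj].
  by rewrite leqNgt hj.
rewrite h1 h2; lia.
Qed.

Lemma cardJ n : #|{: {p : 'I_n * 'I_n | (p.1 <= p.2)%N}}| = (n * n.+1) %/ 2.
Proof.
rewrite card_sig -sum1_card big_mkcond /=.
rewrite -(pair_bigA _ (fun (i j : 'I_n) => if (i <= j)%N then 1 else 0)) /=.
rewrite -triT mulnK // big_mkord; apply: eq_bigr => i _.
rewrite big_mkord; apply: eq_bigr => j _; by case: ifP.
Qed.

Section Core.
Variable G : zmodType.
Hypothesis hG : elem_abelian2 G.
Local Open Scope ring_scope.

Lemma map_fst_false (l : seq G) : map fst [seq (x, false) | x <- l] = l.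
Proof. by elim: l => //= x l ->. Qed.

Lemma not_inj_core (T : {pred G}) (h0 : 0 \in T) (bs : seq G) :
  f2_independent (fun x => x \in bs) -> uniq bs ->
  forall s : seq G, uniq s -> all (fun x => (x \in T) && (x != 0)) s ->
  (forall x, x \in s -> spanL bs x) ->
  ((size bs * (size bs).+1) %/ 2 < size s)%N -> ~ phi_injective T.
Proof.
move=> ind ubs s us hs sp hsz hinj.
set L0 := 0 :: s.
have uL0 : uniq L0.
  rewrite /L0 /= us andbT; apply/negP => /(allP hs) /andP[_]; by rewrite eqxx.
set k := size L0.
set n := size bs.
pose wordof (m : k.-tuple bool) : word G := [seq (x, false) | x <- mask m L0].
pose J := {p : 'I_n * 'I_n | (p.1 <= p.2)%N}.
pose Nf (m : k.-tuple bool) : bool * {ffun J -> bool} :=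
  (odd (size (wordof m)), [ffun p : J => odd (Qc bs (val p).1 (val p).2 (wordof m))]).
have ninj : ~~ injectiveb Nf.
  apply/negP => /injectiveP /leq_card.
  rewrite card_tuple card_prod card_ffun !card_bool cardJ.
  rewrite -expnS leq_exp2l // /k /= ltnS leqNgt.
  by rewrite -/n hsz.
have [m1 [m2 ne eqN]] := injectivePn _ ninj.
have Wm m : Wsp bs (wordof m).
  move=> a /mapP [x /mem_mask xL ->] /=.
  move: xL; rewrite in_cons => /orP[/eqP ->|xs]; first exact: span0.
  exact: sp.
have win m : word_in T (wordof m).
  apply/allP => a /mapP [x /mem_mask xL ->] /=.
  move: xL; rewrite in_cons => /orP[/eqP ->|xs]; first exact: h0.
  by case/andP: (allP hs x xs).
have hw : weq (phiw (wordof m1)) (phiw (wordof m2)).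
  apply: (weq_of_N hG ind ubs (Wm m1) (Wm m2)).
    by case: eqN.
  move=> k0 l0 /andP[kl ln].
  have kn : (k0 < n)%N by apply: leq_ltn_trans ln.
  case: eqN => _ /ffunP /(_ (exist _ (Ordinal kn, Ordinal ln) kl)).
  by rewrite !ffunE.
have hu := hinj _ _ (win m1) (win m2) hw.
have hp := ueq_par hG hu.
apply/negP: ne; rewrite negbK; apply/eqP/eq_from_tnth => i.
have := hp (nth 0 L0 i).
rewrite /cnt !map_fst_false !(count_mask _ uL0 (ltn_ord i)).
by rewrite !(tnth_nth false); case: (nth false m1 i); case: (nth false m2 i).
Qed.

End Core.

End P5.
Import P5.

Module P6.
Local Set Implicit Arguments. Local Unset Strict Implicit. Local Unset Printing Implicit Defensive.

Section Main1.
Variable G : zmodType.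
Hypothesis hG : elem_abelian2 G.
Local Open Scope ring_scope.

Lemma size_count (L s : seq G) : uniq L -> all (fun x => x \in L) s ->
  size s = (\sum_(x <- L) count_mem x s)%N.
Proof.
move=> uL; elim: s => [|a s IH] /=.
  by move=> _; rewrite big1_seq.
case/andP=> aL sL; rewrite IH // big_split /= [X in _ = (X + _)%N](bigD1_seq a) //=.
rewrite eqxx [X in (1 + X)%N]big1 ?addn0 // => x /negbTE.
by rewrite eq_sym => ->.
Qed.

Lemma odd_sum_eq (L : seq G) (f g : G -> nat) : (forall x, odd (f x) = odd (g x)) ->
  odd (\sum_(x <- L) f x)%N = odd (\sum_(x <- L) g x)%N.
Proof. by move=> h; elim: L => [|x L IH]; rewrite ?big_nil // !big_cons !oddD IH h. Qed.

Lemma inj_of_basis (T : {pred G}) : is_basis [pred x | (x \in T) && (x != 0)] -> phi_injective T.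
Proof.
move=> [ind _] u v uT vT hw.
apply: (complete hG) => //.
set su := filter (fun x => x != 0) (map fst u).
set sv := filter (fun x => x != 0) (map fst v).
have allT (w : word G) : word_in T w -> all (fun x => x \in [pred x | (x \in T) && (x != 0)]) (filter (fun x => x != 0) (map fst w)).
  move=> wT; apply/allP => x; rewrite mem_filter => /andP[xn xm]; rewrite inE xn andbT.
  by case/mapP: xm => a aw ->; exact: (allP wT a aw).
have sg (w : word G) : \sum_(x <- filter (fun x => x != 0) (map fst w)) x = gsum w.
  rewrite big_filter big_mkcond big_map /gsum; apply: eq_bigr => a _.
  by case: eqP => // ->.
have eg : gsum u = gsum v by case: hw => h _; rewrite -!(phiw_g hG).
have es : odd (size u) = odd (size v) by case: hw => _ [h _]; rewrite -!phiw_sgn.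
have wd := WD hG ind (allT u uT) (allT v vT) (etrans (sg u) (etrans eg (esym (sg v)))).
have cx (w : word G) x : x != 0 -> count_mem x (filter (fun x => x != 0) (map fst w)) = cnt x w.
  move=> xn; rewrite /cnt count_filter; apply: eq_count => y /=.
  by case: eqP => // ->; rewrite xn.
move=> x; case: (eqVneq x 0) => [->|xn]; last by rewrite -!cx // wd.
have sz (w : word G) : size w = addn (cnt 0 w) (size (filter (fun x => x != 0) (map fst w))).
  by rewrite size_filter /cnt -(size_map fst) -(count_predC (pred1 (0 : G))).
set L := undup (su ++ sv).
have uL : uniq L by apply: undup_uniq.
have esz : odd (size su) = odd (size sv).
  rewrite (size_count uL (s := su)) ?(size_count uL (s := sv)); first by apply: odd_sum_eq; exact: wd.
  - by apply/allP => y ys; rewrite mem_undup mem_cat ys orbT.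
  - by apply/allP => y ys; rewrite mem_undup mem_cat ys.
move: es; rewrite (sz u) (sz v) !oddD -/su -/sv esz.
by move/addIb.
Qed.

End Main1.

End P6.
Import P6.

Module P7.
Local Set Implicit Arguments. Local Unset Strict Implicit. Local Unset Printing Implicit Defensive.

Section Main3.
Variable G : zmodType.
Hypothesis hG : elem_abelian2 G.
Local Open Scope ring_scope.

Lemma basis_small (T : {pred G}) (bs : seq G) : (forall g, g \in T) ->
  f2_independent (fun x => x \in bs) -> (forall g, g = 0 \/ g \in bs) ->
  is_basis [pred x | (x \in T) && (x != 0)].
Proof.
move=> hT ind h; split.
  move=> s us hs e; apply: ind => //; apply/allP => x xs.
  have /andP[_ xn] := allP hs x xs.
  by case: (h x) => // x0; rewrite x0 eqxx in xn.
move=> g; case: (eqVneq g 0) => [->|gn].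
  by exists [::]; rewrite big_nil.
by exists [:: g]; rewrite big_seq1 /= inE hT gn.
Qed.

Lemma sum_pred1 (e : G) s : all (pred1 e) s -> \sum_(x <- s) x = e *+ size s.
Proof.
elim: s => [|x s IH] /=; first by rewrite big_nil.
by case/andP => /eqP -> hs; rewrite big_cons IH // mulrS.
Qed.

Lemma small_elems (bs : seq G) : (size bs <= 1)%N -> generates (fun x => x \in bs) ->
  forall g, g = 0 \/ g \in bs.
Proof.
move=> sz gen g; have [s [hs ->]] := gen g.
move: hs; clear gen; case: bs sz => [|e [|]] //= _ hs.
  by case: s hs => [|x s] //= _; left; rewrite big_nil.
have : all (pred1 e) s by apply/allP => x xs; have := allP hs x xs; rewrite inE.
move/sum_pred1 => ->; rewrite (mulrn_odd hG); case: (odd _); [right; exact: mem_head | by left].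
Qed.

End Main3.

End P7.
Import P7.

Module P8.
Local Set Implicit Arguments. Local Unset Strict Implicit. Local Unset Printing Implicit Defensive.
Local Open Scope ring_scope.

Lemma Z2xor (p q : bool) : ((p (+) q)%:R : 'Z_2) = p%:R + q%:R.
Proof. by case: p; case: q; apply/val_inj. Qed.

Lemma Z2inj (p q : bool) : (p%:R : 'Z_2) = q%:R -> p = q.
Proof. by case: p; case: q => // /(congr1 val). Qed.

Lemma cnt_poly (A : Type) (p q : A -> bool) c0 c1 (w : seq A) :
  odd (count (fun a => (p a == c0) && (q a == c1)) w) =
  odd (count (fun a => p a && q a) w) (+) (~~ c1 && odd (count p w))
  (+) (~~ c0 && odd (count q w)) (+) (~~ c0 && ~~ c1 && odd (size w)).
Proof.
elim: w => [|a w IH] /=; first by case: c0; case: c1.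
rewrite !oddD IH !oddb; clear IH.
by case: (p a); case: (q a); case: c0; case: c1;
  case: (odd (count _ w)); case: (odd (count _ w)); case: (odd (count _ w)); case: (odd (size w)).
Qed.

Section Dim2.
Variable G : zmodType.
Hypothesis hG : elem_abelian2 G.

Lemma inj_dim2 (T : {pred G}) (bs : seq G) : (forall g, g \in T) ->
  f2_independent (fun x => x \in bs) -> uniq bs -> size bs = 2%N ->
  generates (fun x => x \in bs) -> phi_injective T.
Proof.
move=> hT ind ubs sz2 gen u v uT vT hw.
have sp g : spanL bs g by exact: gen g.
have Wa w : Wsp bs w by move=> a _; exact: sp.
pose c k g := crd bs k g.
pose bd (x y : G) : 'Z_2 := ((c 0%N x && c 1%N y) (+) (c 1%N x && c 0%N y))%:R.
have hbd : isbil bd.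
  split.
  - move=> h x y; rewrite /bd /c !(crdD hG ind) // -Z2xor; congr (_%:R).
    by move: (crd bs 0 x) (crd bs 1 x) (crd bs 0 y) (crd bs 1 y) (crd bs 0 h) (crd bs 1 h); do 6!case.
  - move=> g x y; rewrite /bd /c !(crdD hG ind) // -Z2xor; congr (_%:R).
    by move: (crd bs 0 x) (crd bs 1 x) (crd bs 0 y) (crd bs 1 y) (crd bs 0 g) (crd bs 1 g); do 6!case.
  - by move=> g; rewrite /bd andbC addbb.
have Bbd w : Bw bd w = (odd (Sc bs 0 w * Sc bs 1 w + Qc bs 0 1 w))%:R.
  rewrite (Bformula hG ind ubs hbd (Wa w)) sz2 /index_iota /= !big_cons !big_nil /=.
  rewrite !addr0 !add0r /bd /c !(crd_nth hG ind ubs) ?sz2 //=.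
have eB := weq_B hw hbd; rewrite !Bbd in eB; move/Z2inj: eB => eB.
have eg : gsum u = gsum v by case: hw => h _; rewrite -!(phiw_g hG).
have es : odd (size u) = odd (size v) by case: hw => _ [h _]; rewrite -!phiw_sgn.
have eS k : odd (Sc bs k u) = odd (Sc bs k v) by rewrite -!(crd_gsum hG ind) ?eg.
have eQ : odd (Qc bs 0 1 u) = odd (Qc bs 0 1 v).
  by move: eB; rewrite !oddD !oddM !eS => /addbI.
apply: (complete hG) => // y.
have ey w : cnt y w = count (fun a => (c 0%N a.1 == c 0%N y) && (c 1%N a.1 == c 1%N y)) w.
  rewrite /cnt count_map; apply: eq_count => a /=.
  apply/eqP/andP => [->|[/eqP e0 /eqP e1]]; first by [].
  rewrite (recon hG ubs (sp a.1)) (recon hG ubs (sp y)) sz2 /index_iota /= !big_cons !big_nil.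
  by rewrite /c in e0 e1; rewrite e0 e1.
rewrite !ey !(cnt_poly (fun a : G * bool => c 0%N a.1) (fun a => c 1%N a.1)).
by rewrite es -!/(Sc bs _ _) -!/(Qc bs _ _ _) !eS eQ.
Qed.

End Dim2.

End P8.
Import P8.

Module P9.
Local Set Implicit Arguments. Local Unset Strict Implicit. Local Unset Printing Implicit Defensive.
Local Open Scope ring_scope.

Section Final.
Variable G : zmodType.
Hypothesis hG : elem_abelian2 G.

Lemma ind_nil : f2_independent (fun x : G => x \in [::]).
Proof. by move=> [|x s] // _ /andP[]. Qed.

Lemma ind_cons (bs : seq G) x : f2_independent (fun y => y \in bs) -> ~ spanL bs x ->
  f2_independent (fun y => y \in x :: bs).
Proof.
move=> ind nx s us hs e; case xs: (x \in s).
  exfalso; apply: nx; exists (rem x s); split.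
    apply/allP => y; rewrite mem_rem_uniq // => /andP[yx ys].
    by have := allP hs y ys; rewrite in_cons (negbTE yx).
  move: e; rewrite (perm_big _ (perm_to_rem xs)) big_cons => /eqP.
  by rewrite addr_eq0 (oppE hG) => /eqP.
apply: ind => //; apply/allP => y ys; have := allP hs y ys; rewrite in_cons.
case/orP => // /eqP ey; by rewrite ey xs in ys.
Qed.

Lemma uniq_cons (bs : seq G) x : uniq bs -> ~ spanL bs x -> uniq (x :: bs).
Proof. by move=> ubs nx /=; rewrite ubs andbT; apply/negP => /span_mem. Qed.

Lemma dim_le2_of_inj (T : {pred G}) : (forall g, g \in T) -> 0 \in T ->
  phi_injective T -> exists n, (n <= 2)%N /\ has_dim G n.
Proof.
move=> hT h0 inj; apply: NNPP => hn.
have hd (bs : seq G) : f2_independent (fun x => x \in bs) -> uniq bs -> (size bs <= 2)%N ->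
    exists x, ~ spanL bs x.
  move=> ind ubs sz; apply: NNPP => hno; apply: hn; exists (size bs); split => //.
  exists bs; split => //; split => // g; apply: NNPP => h; apply: hno; exists g; exact: h.
have [a ha] := hd [::] ind_nil isT isT.
have ind1 := ind_cons ind_nil ha; have u1 := uniq_cons (bs := [::]) isT ha.
have [b hb] := hd _ ind1 u1 isT.
have ind2 := ind_cons ind1 hb; have u2 := uniq_cons u1 hb.
have [c hc] := hd _ ind2 u2 isT.
have ind3 := ind_cons ind2 hc; have u3 := uniq_cons u2 hc.
set bs3 := [:: c; b; a] in ind3 u3.
pose f (m : 3.-tuple bool) : G := \sum_(y <- mask m bs3) y.
have finj : injective f.
  move=> m1 m2 e; apply: eq_from_tnth => i; rewrite !(tnth_nth false).
  rewrite -(crd_mask hG ind3 u3 m1 (ltn_ord i)) -(crd_mask hG ind3 u3 m2 (ltn_ord i)).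
  by rewrite -/(f m1) e.
set l := undup [seq f m | m <- enum {: 3.-tuple bool}].
have ul : uniq l by apply: undup_uniq.
have szl : size l = 8%N.
  rewrite /l undup_id ?(map_inj_uniq finj) ?enum_uniq // size_map -cardE.
  by rewrite card_tuple card_bool.
have l0 : (0 : G) \in l.
  rewrite mem_undup; apply/mapP; exists [tuple false; false; false]; first by rewrite mem_enum.
  by rewrite /f /= big_nil.
apply: (@not_inj_core _ hG T h0 bs3 ind3 u3 [seq x <- l | x != 0]).
- by rewrite filter_uniq.
- by apply/allP => x; rewrite mem_filter => /andP[-> _]; rewrite hT.
- move=> x; rewrite mem_filter => /andP[_]; rewrite mem_undup => /mapP [m _ ->].
  exists (mask m bs3); split => //; apply/allP => y; exact: mem_mask.
- rewrite size_filter.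
  have := count_predC (pred1 (0 : G)) l.
  rewrite szl count_uniq_mem // l0 /= => h.
  have e : count (fun x : G => x != 0) l = 7%N.
    by apply: succn_inj; rewrite -add1n; exact: h.
  by rewrite e.
- exact: inj.
Qed.

End Final.


End P9.
Import P9.

Local Open Scope ring_scope.

Theorem corollary4p5 (G : zmodType) (T : {pred G})
    (hG : elem_abelian2 G) (h0 : 0 \in T) (hgen : generates T) :
  (is_basis [pred x | (x \in T) && (x != 0)] -> phi_injective T)
  /\ (forall (n : nat) (s : seq G), has_dim G n -> uniq s ->
        all (fun x => (x \in T) && (x != 0)) s ->
        ((n * n.+1) %/ 2 < size s)%N -> ~ phi_injective T)
  /\ ((forall g : G, g \in T) ->
        (phi_injective T <-> exists n : nat, (n <= 2)%N /\ has_dim G n)).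
Proof.
split; first by move=> hb; apply: (inj_of_basis hG); exact: hb.
split.
  move=> n s [bs [ubs szn [ind gen]]] us hs hsz.
  apply: (not_inj_core hG h0 ind ubs us hs); first by move=> x _; exact: gen x.
  by rewrite szn.
move=> hT; split; first exact: dim_le2_of_inj.
move=> [n [n2 [bs [ubs szn [ind gen]]]]].
case: n n2 szn => [|[|[|]]] // _ szn.
- apply: (inj_of_basis hG); apply: (basis_small hT ind); apply: small_elems => //; by rewrite szn.
- apply: (inj_of_basis hG); apply: (basis_small hT ind); apply: small_elems => //; by rewrite szn.
- exact: (inj_dim2 hG hT ind ubs szn gen).
Qed.
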